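(* Let $A$ be a real upper-triangular $d\times d$ matrix with real nonzero eigenvalues. If $A$ is invertible and $\lambda_i(A)\neq\lambda_{i'}(A)$ for all $i\neq i'$, then $T_A=P_{\rm low}(1\otimes A^T-A\otimes1)P_{\rm low}^T$ is invertible.
   Context: $\otimes$ is the Kronecker product, $1$ the identity. $P_{\rm low}\in\{0,1\}^{\frac{d(d-1)}2\times d^2}$ has as rows the standard basis row vectors of $\mathbb R^{d^2}$ selecting (in increasing order) the entries of the column-wise vectorization ${\rm vec}(B)$ corresponding to strictly lower-triangular entries ($i>j$) of $B$. *)

(* Defs.v *)
From HB Require Import structures.
From mathcomp Require Import all_boot all_order all_algebra.
From mathcomp Require Import mxtens.
From mathcomp Require Import reals.
Set Implicit Arguments. Unset Strict Implicit. Unset Printing Implicit Defensive.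
Import Order.TTheory GRing.Theory Num.Theory.
Local Open Scope ring_scope.

(* Column-wise vectorization vec(B) of a d x d matrix: entry B i j sits at
   0-based position j*d + i, i.e. mxtens_index (j, i).  A position p thus
   corresponds to row p %% d and column p %/ d, and is strictly
   lower-triangular iff p %/ d < p %% d. *)
Definition low_pos (d : nat) : seq nat :=
  [seq p <- iota 0 (d * d) | (p %/ d < p %% d)%N].

Definition P_low (R : pzRingType) (d : nat) : 'M[R]_((d * (d - 1)) %/ 2, d * d) :=
  \matrix_(k, c) ((val c == nth 0%N (low_pos d) k)%:R).

Definition T_mat (R : comPzRingType) (d : nat) (A : 'M[R]_d) :
    'M[R]_((d * (d - 1)) %/ 2) :=
  P_low R d *m ((1%:M *t A^T) - (A *t 1%:M)) *m (P_low R d)^T.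

(* Main.v *)
Require Import Defs.
From HB Require Import structures.
From mathcomp Require Import all_boot all_order all_algebra.
From mathcomp Require Import mxtens zify.
From mathcomp Require Import reals.
Import Order.TTheory GRing.Theory Num.Theory.
Local Open Scope ring_scope.

Lemma count_gt (m d : nat) : count (fun b => (m < b)%N) (iota 0 d) = (d - m.+1)%N.
Proof.
elim: d => [|d IH] //.
rewrite -[d.+1]addn1 iotaD count_cat IH /= addn0.
case: (ltnP m d) => H; lia.
Qed.

Lemma count_low_m (d m : nat) : (m < d)%N ->
  count (fun p => (p %/ d < p %% d)%N) (iota (m * d) d) = (d - m.+1)%N.
Proof.
move=> md; rewrite -[(m * d)%N]addn0 iotaDl count_map -(count_gt m d).
apply: eq_in_count => b; rewrite mem_iota add0n => /= bd.
rewrite divnMDl ?modnMDl ?divn_small ?modn_small ?addn0 //; lia.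
Qed.

Lemma count_low (d m : nat) : (m <= d)%N ->
  (2 * count (fun p => (p %/ d < p %% d)%N) (iota 0 (m * d)) + m * (m - 1)
   = 2 * m * (d - 1))%N.
Proof.
elim: m => [|m IH] md; first by rewrite mul0n.
rewrite [(m.+1 * d)%N]mulSnr iotaD count_cat add0n.
rewrite count_low_m //.
have := IH (ltnW md). nia.
Qed.

Lemma size_low (d : nat) : size (low_pos d) = ((d * (d - 1)) %/ 2)%N.
Proof.
rewrite /low_pos size_filter.
have := @count_low d d (leqnn d). lia.
Qed.
Lemma key (R : fieldType) d (A : 'M[R]_d) (W : 'I_d -> 'I_d -> R) :
 (forall i j : 'I_d, (j < i)%N -> A i j = 0) ->
 (forall i j : 'I_d, A i i = A j j -> i = j) ->
 (forall a b : 'I_d, ~~ (a < b)%N -> W a b = 0) ->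
 (forall c e : 'I_d, (c < e)%N ->
    \sum_b W c b * A e b - \sum_a W a e * A a c = 0) ->
 forall a b, W a b = 0.
Proof.
move=> Aup Adiag W0 Heq.
suff H : forall k (c e : 'I_d), (d <= (e - c) + k)%N -> W c e = 0.
  move=> a b; apply: (H d); lia.
elim=> [|k IH] c e.
  rewrite addn0 => hd; have := ltn_ord e; lia.
move=> hd.
have [ce|ec] := ltnP c e; last by apply: W0; rewrite -leqNgt.
have := Heq c e ce.
rewrite (bigD1 e) //= [X in _ - X](bigD1 c) //=.
rewrite big1; last first.
  move=> b; rewrite -val_eqE /= => neb.
  have [be|eb] := ltnP b e; first by rewrite Aup ?mulr0.
  rewrite IH ?mul0r //.
  have : (e < b)%N by lia.
  lia.
rewrite [X in _ - (_ + X)]big1; last first.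
  move=> a; rewrite -val_eqE /= => nea.
  have [ca|ac] := ltnP c a; first by rewrite Aup ?mulr0.
  rewrite IH ?mul0r //.
  have : (a < c)%N by lia.
  lia.
rewrite !addr0 -mulrBr => /eqP; rewrite mulf_eq0 subr_eq0 => /orP [/eqP //|].
move=> /eqP /Adiag ec; move: ce; rewrite ec ltnn //.
Qed.
Lemma diag_inj (R : fieldType) d (A : 'M[R]_d) (lam : 'I_d -> R) :
  (forall i j : 'I_d, (j < i)%N -> A i j = 0) ->
  char_poly A = \prod_(i < d) ('X - (lam i)%:P) ->
  injective lam ->
  forall i j : 'I_d, A i i = A j j -> i = j.
Proof.
move=> Aup hc linj.
have hT : char_poly A = char_poly A^T.
  rewrite /char_poly -det_tr /char_poly_mx; congr (\det _).
  by rewrite linearB /= tr_scalar_mx map_trmx.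
have trig : is_trig_mx A^T.
  by apply/is_trig_mxP => i j ij; rewrite mxE Aup.
move: hc; rewrite hT char_poly_trig //.
have E : forall f : 'I_d -> R, \prod_(i < d) ('X - (f i)%:P) =
   \prod_(x <- map f (enum 'I_d)) ('X - x%:P).
  by move=> f; rewrite big_map big_enum.
rewrite !E => /prod_XsubC_eq hp.
have u : uniq (map (fun i => A^T i i) (enum 'I_d)).
  by rewrite (perm_uniq hp) map_inj_uniq ?enum_uniq.
have /injectiveP hi : injectiveb (fun i => A^T i i) by [].
by move=> i j hij; apply: hi; rewrite /= !mxE.
Qed.

Theorem lemma8 (R : realType) (d : nat) (A : 'M[R]_d) (lam : 'I_d -> R) :
  (forall i j : 'I_d, (j < i)%N -> A i j = 0) ->
  char_poly A = \prod_(i < d) ('X - (lam i)%:P) ->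
  (forall i, lam i != 0) ->
  A \in unitmx ->
  injective lam ->
  T_mat A \in unitmx.
Proof.
move=> Aup hc lnz Au linj.
have Adiag := @diag_inj _ _ A lam Aup hc linj.
rewrite -row_free_unit; apply: inj_row_free => v hv.
have sz : size (low_pos d) = ((d * (d - 1)) %/ 2)%N := size_low d.
have us : uniq (low_pos d) by rewrite filter_uniq // iota_uniq.
have smem : forall p, (p \in low_pos d) = (p %/ d < p %% d)%N && (p < d * d)%N.
  by move=> p; rewrite mem_filter mem_iota add0n.
have slt : forall k, (k < (d * (d - 1)) %/ 2)%N -> (nth 0%N (low_pos d) k < d * d)%N.
  move=> k hk; have : nth 0%N (low_pos d) k \in low_pos d by rewrite mem_nth ?sz.
  by rewrite smem => /andP[].
set w := v *m P_low R d.
have hw0 : forall p : 'I_(d*d), ~~ (p %/ d < p %% d)%N -> w 0 p = 0.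
  move=> p hp; rewrite !mxE big1 // => k _; rewrite mxE.
  case: eqP => [e|]; last by rewrite mulr0.
  have : (p : nat) \in low_pos d by rewrite e mem_nth ?sz.
  by rewrite smem (negbTE hp).
have hwk : forall k : 'I_((d * (d - 1)) %/ 2), w 0 (Ordinal (slt k (ltn_ord k))) = v 0 k.
  move=> k; rewrite mxE (bigD1 k) //= mxE eqxx mulr1 big1 ?addr0 // => k' nk.
  rewrite mxE /=; case: eqP => e; last by rewrite mulr0.
  suff : k' = k by move/eqP; rewrite (negbTE nk).
  by apply/val_inj/eqP; rewrite /= -(nth_uniq 0%N _ _ us) ?sz // e.
set M := (1%:M *t A^T - A *t 1%:M) : 'M[R]_(d * d).
have hz : forall q : 'I_(d*d), (q %/ d < q %% d)%N -> (w *m M) 0 q = 0.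
  move=> q hq.
  have qin : (q : nat) \in low_pos d by rewrite smem hq ltn_ord.
  have kl : (index (q : nat) (low_pos d) < (d * (d - 1)) %/ 2)%N by rewrite -sz index_mem.
  move/matrixP: (hv) => /(_ 0 (Ordinal kl)).
  rewrite /T_mat !mulmxA -/w -/M.
  set z := w *m M.
  rewrite mxE [RHS]mxE (bigD1 q) //= big1 ?addr0; last first.
    move=> q' nq; rewrite !mxE /= nth_index //.
    by move: nq; rewrite -val_eqE /= => /negbTE ->; rewrite mulr0.
  by rewrite !mxE /= nth_index // eqxx mulr1.
pose W (a b : 'I_d) := w 0 (mxtens_index (a, b)).
have idx : forall a b : 'I_d, ((mxtens_index (a, b) : nat) %/ d = a /\ (mxtens_index (a, b) : nat) %% d = b)%N.
  move=> a b /=; have := ltn_ord b => hb.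
  by rewrite divnMDl ?modnMDl ?divn_small ?modn_small ?addn0 //; lia.
have W0 : forall a b : 'I_d, ~~ (a < b)%N -> W a b = 0.
  by move=> a b hab; apply: hw0; have [-> ->] := idx a b.
have Heq : forall c e : 'I_d, (c < e)%N ->
    \sum_b W c b * A e b - \sum_a W a e * A a c = 0.
  move=> c e ce.
  have := hz (mxtens_index (c, e)); have [-> ->] := idx c e => /(_ ce).
  rewrite mxE => hzz; rewrite -[RHS]hzz.
  rewrite (reindex (@mxtens_index d d)) /=; last first.
    by exists (@mxtens_unindex d d) => p _; rewrite (mxtens_indexK, mxtens_unindexK).
  pose F := fun a b : 'I_d => w 0 (mxtens_index (a, b)) * M (mxtens_index (a, b)) (mxtens_index (c, e)).
  rewrite [RHS](eq_bigr (fun p => F p.1 p.2)); last by case.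
  rewrite -pair_bigA /F /=.
  have HM : forall a b : 'I_d, M (mxtens_index (a,b)) (mxtens_index (c,e))
      = (a == c)%:R * A e b - A a c * (b == e)%:R.
    by move=> a b; rewrite /M !mxE !mxtens_indexK /=.
  rewrite [RHS](eq_bigr (fun a => \sum_b W a b * ((a == c)%:R * A e b)
      - \sum_b W a b * (A a c * (b == e)%:R))); last first.
    by move=> a _; rewrite -sumrB; apply: eq_bigr => b _; rewrite HM mulrBr.
  rewrite sumrB; congr (_ - _).
    rewrite [RHS](bigD1 c) //= [X in _ = _ + X]big1 ?addr0.
      by apply: eq_bigr => b _; rewrite eqxx mul1r.
    move=> a nac; apply: big1 => b _.
    by rewrite (negbTE nac) mul0r mulr0.
  apply: eq_bigr => a _.
  rewrite (bigD1 e) //= [X in _ = _ + X]big1 ?addr0.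
    by rewrite eqxx mulr1.
  by move=> b nbe; rewrite (negbTE nbe) mulr0 mulr0.
have W00 := @key _ _ A W Aup Adiag W0 Heq.
have w0 : w = 0.
  apply/matrixP => i p; rewrite (ord1 i) [RHS]mxE.
  rewrite -[p]mxtens_unindexK; case: (mxtens_unindex p) => a b.
  exact: (W00 a b).
apply/matrixP => i k; rewrite (ord1 i) mxE -hwk w0 mxE //.
Qed.
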